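(* Let $r\ge 2$ and let $F$ be a graph with chromatic number $\chi(F)=r+1$ that has a color-critical edge; let $t=|V(F)|$. There exists $\varepsilon_0>0$ such that for every $0<\varepsilon<\varepsilon_0$ there is $n_0$ with the following property. Let $G$ be an $F$-free graph on $n\ge n_0$ vertices, and let $U_1,\dots,U_r$ be pairwise disjoint subsets of $V(G)$ with $|U_i|\ge rt\varepsilon n+t$ for every $i$, such that for every $i$, every $v\in U_i$ and every $j\ne i$ we have $|N_G(v)\cap U_j|\ge |U_j|-\varepsilon n$. Then: (i) each of $U_1,\dots,U_r$ is an independent set in $G$; (ii) for every vertex $x\in V(G)\setminus(U_1\cup\dots\cup U_r)$ there is an index $i\in\{1,\dots,r\}$ such that $x$ has at most $\varepsilon r t n$ neighbors in $U_i$.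
   Context: An edge $e$ of a graph $F$ is color-critical if $\chi(F-e)<\chi(F)$. A graph is $F$-free if it has no subgraph isomorphic to $F$. $N_G(v)$ denotes the set of neighbors of $v$ in $G$. The condition on $U_1,\dots,U_r$ says that the $r$-partite subgraph of $G$ with parts $U_1,\dots,U_r$ is ''$\varepsilon$-almost complete'': every vertex of a part has at most $\varepsilon n$ non-neighbors in each other part. *)

(* Defs.v *)
From mathcomp Require Import all_boot all_order all_algebra.
From mathcomp Require Import reals.
Set Implicit Arguments. Unset Strict Implicit. Unset Printing Implicit Defensive.

Definition simple_graph (T : finType) (e : rel T) : Prop :=
  symmetric e /\ irreflexive e.

Definition colorable (T : finType) (e : rel T) (k : nat) : Prop :=
  exists c : {ffun T -> 'I_k}, forall x y, e x y -> c x != c y.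

Definition chromatic_number_eq (T : finType) (e : rel T) (k : nat) : Prop :=
  colorable e k /\ forall k', k' < k -> ~ colorable e k'.

Definition del_edge (T : finType) (e : rel T) (u v : T) : rel T :=
  fun x y => e x y && ~~ (((x == u) && (y == v)) || ((x == v) && (y == u))).

(* {u,v} is a color-critical edge of e : chi(e - uv) < chi(e),
   where chi(e) = k is given. *)
Definition color_critical_edge (T : finType) (e : rel T) (k : nat) (u v : T) : Prop :=
  e u v /\ exists k', k' < k /\ colorable (del_edge e u v) k'.

Definition contains_subgraph (TF TG : finType) (F : rel TF) (G : rel TG) : Prop :=
  exists f : TF -> TG, injective f /\ forall x y, F x y -> G (f x) (f y).

Definition F_free (TF TG : finType) (F : rel TF) (G : rel TG) : Prop :=
  ~ contains_subgraph F G.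

Definition nbhd_in (T : finType) (G : rel T) (v : T) (A : {set T}) : {set T} :=
  [set w in A | G v w].

Definition independent (T : finType) (G : rel T) (A : {set T}) : Prop :=
  forall x y, x \in A -> y \in A -> ~~ G x y.

(* Main.v *)
Require Import Defs.
From mathcomp Require Import all_boot all_order all_algebra perm.
From mathcomp Require Import reals lra.
Import Order.TTheory GRing.Theory Num.Theory.
Set Implicit Arguments. Unset Strict Implicit.
Local Open Scope ring_scope.

Definition okF (TF TG : finType) (F : rel TF) (G : rel TG) (S : TF -> {set TG})
  (D : {set TF}) (f : TF -> TG) : Prop :=
  [/\ {in D &, injective f}, (forall a, a \in D -> f a \in S a) &
      (forall a b, a \in D -> b \in D -> F a b -> G (f a) (f b))].

Lemma greedy (TF TG : finType) (F : rel TF) (G : rel TG) (S : TF -> {set TG})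
  (D0 : {set TF}) (f0 : TF -> TG) :
  irreflexive F -> symmetric G -> okF F G S D0 f0 ->
  (forall w (D : {set TF}) (f : TF -> TG), w \notin D -> D0 \subset D -> okF F G S D f ->
     exists y, [/\ y \in S w, y \notin f @: D &
        forall a, a \in D -> F w a || F a w -> G y (f a)]) ->
  exists f : TF -> TG, injective f /\ forall x y, F x y -> G (f x) (f y).
Proof.
move=> Firr Gsym ok0 step.
suff: forall k D f, (#|~: D| <= k)%N -> D0 \subset D -> okF F G S D f ->
        exists f', okF F G S setT f'.
  move=> /(_ #|~: D0| D0 f0 (leqnn _) (subxx _) ok0) [f' [inj _ ed]].
  exists f'; split; first by move=> a b; apply: inj; rewrite in_setT.
  by move=> a b; apply: ed; rewrite in_setT.
elim=> [|k IH] D f Hk sub ok.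
  case: (set_0Vmem (~: D)) => [HD|[w Hw]].
    by exists f; rewrite -[setT]setC0 -HD setCK.
  by move: Hk; rewrite leqn0 cards_eq0 => /eqP HD; rewrite HD inE in Hw.
case: (set_0Vmem (~: D)) => [HD|[w Hw]].
  by exists f; rewrite -[setT]setC0 -HD setCK.
have wD : w \notin D by rewrite inE in Hw.
have [y [yS yf yG]] := step w D f wD sub ok.
case: ok => inj fS fG.
apply: (IH (w |: D) (fun a => if a == w then y else f a)).
- rewrite -ltnS; apply: leq_trans Hk; apply: proper_card; apply/properP; split.
    by apply/subsetP => a; rewrite !inE negb_or => /andP[].
  by exists w => //; rewrite !inE eqxx.
- by apply: subset_trans sub (subsetUr _ _).
split.
- move=> a b; rewrite !inE => /orP[/eqP->|aD] /orP[/eqP->|bD] //=; rewrite ?eqxx.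
  + have bw : (b == w) = false by apply/negbTE; apply: contraNneq wD => <-.
    rewrite bw => E; by rewrite E imset_f in yf.
  + have aw : (a == w) = false by apply/negbTE; apply: contraNneq wD => <-.
    rewrite aw => E; by rewrite -E imset_f in yf.
  + have aw : (a == w) = false by apply/negbTE; apply: contraNneq wD => <-.
    have bw : (b == w) = false by apply/negbTE; apply: contraNneq wD => <-.
    by rewrite aw bw; apply: inj.
- move=> a; rewrite !inE => /orP[/eqP->|aD]; first by rewrite eqxx.
  have aw : (a == w) = false by apply/negbTE; apply: contraNneq wD => <-.
  by rewrite aw; apply: fS.
- move=> a b; rewrite !inE => /orP[/eqP->|aD] /orP[/eqP->|bD] //=; rewrite ?eqxx.
  + by rewrite Firr.
  + have bw : (b == w) = false by apply/negbTE; apply: contraNneq wD => <-.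
    by rewrite bw => Fwb; apply: yG => //; rewrite Fwb.
  + have aw : (a == w) = false by apply/negbTE; apply: contraNneq wD => <-.
    by rewrite aw => Faw; rewrite Gsym; apply: yG => //; rewrite Faw orbT.
  + have aw : (a == w) = false by apply/negbTE; apply: contraNneq wD => <-.
    have bw : (b == w) = false by apply/negbTE; apply: contraNneq wD => <-.
    by rewrite aw bw; apply: fG.
Qed.

Lemma card_bigcup_le (T I : finType) (D : {pred I}) (B : I -> {set T}) :
  (#|\bigcup_(a in D) B a| <= \sum_(a in D) #|B a|)%N.
Proof.
apply: (big_ind2 (fun (X : {set T}) (n : nat) => #|X| <= n)%N).
- by rewrite cards0.
- move=> X m Y n h1 h2; rewrite cardsU; apply: leq_trans (leq_subr _ _) _.
  exact: leq_add.
- by [].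
Qed.

Lemma step_gen (R : realType) (TF TG : finType) (F : rel TF) (G : rel TG)
  (D : {set TF}) (Sw : {set TG}) (f : TF -> TG) (w : TF) (b : R) :
  0 <= b ->
  (forall a, a \in D -> F w a || F a w -> #|[set y in Sw | ~~ G y (f a)]|%:R <= b) ->
  #|D|%:R + #|D|%:R * b < #|Sw|%:R ->
  exists y, [/\ y \in Sw, y \notin f @: D &
        forall a, a \in D -> F w a || F a w -> G y (f a)].
Proof.
move=> b0 hb hc.
pose B a := [set y in Sw | (F w a || F a w) && ~~ G y (f a)].
pose Bad := f @: D :|: \bigcup_(a in D) B a.
have cB : (#|Bad| <= #|D| + \sum_(a in D) #|B a|)%N.
  rewrite cardsU; apply: leq_trans (leq_subr _ _) _.
  exact: leq_add (leq_imset_card _ _) (card_bigcup_le _ _).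
have sB : (\sum_(a in D) #|B a|)%:R <= #|D|%:R * b :> R.
  have -> : #|D|%:R * b = \sum_(a in D) b by rewrite sumr_const mulr_natl.
  rewrite natr_sum.
  apply: ler_sum => a aD; rewrite /B.
  case: (boolP (F w a || F a w)) => e.
    apply: le_trans (hb a aD e); rewrite ler_nat; apply: subset_leq_card.
    by apply/subsetP => y; rewrite !inE.
  rewrite (_ : [set _ in _ | _] = set0) ?cards0 //.
  by apply/setP => y; rewrite !inE andbF.
have : ~~ (Sw \subset Bad).
  apply/negP => /subset_leq_card hc'.
  have h : #|Sw|%:R <= (#|D| + \sum_(a in D) #|B a|)%N%:R :> R.
    by rewrite ler_nat (leq_trans hc' cB).
  rewrite natrD in h.
  by have := lt_le_trans hc (le_trans h (lerD (lexx _) sB)); rewrite ltxx.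
case/subsetPn => y yS; rewrite !inE negb_or => /andP[yf /bigcupP nb].
exists y; split => // a aD e; apply/negPn/negP => nG; apply: nb.
by exists a => //; rewrite !inE yS e nG.
Qed.
Lemma crit_col (TF : finType) (F : rel TF) (r : nat) (u v : TF) :
  (forall k', (k' < r.+1)%N -> ~ colorable F k') ->
  color_critical_edge F r.+1 u v ->
  forall i : 'I_r, exists c : TF -> 'I_r,
    [/\ c u = i, c v = i & forall a b, del_edge F u v a b -> c a != c b].
Proof.
move=> nc [Fuv [k [hk [c hc]]]] i.
have kr : (k <= r)%N by [].
pose c1 a := widen_ord kr (c a).
have hc1 : forall a b, del_edge F u v a b -> c1 a != c1 b.
  move=> a b h; apply: contra (hc a b h) => /eqP E; apply/eqP; apply: val_inj.
  by have := congr1 val E.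
have euv : c1 u = c1 v.
  apply/eqP; apply/negPn/negP => ne; apply: (nc r (ltnSn r)).
  exists [ffun a => c1 a] => a b Fab; rewrite !ffunE.
  case: (boolP (del_edge F u v a b)) => [/hc1 //|].
  rewrite /del_edge Fab /= negbK => /orP[/andP[/eqP-> /eqP->]|/andP[/eqP-> /eqP->]] //.
  by rewrite eq_sym.
exists (fun a => tperm (c1 u) i (c1 a)); split.
- by rewrite tpermL.
- by rewrite -euv tpermL.
- by move=> a b h; apply: contra (hc1 a b h) => /eqP/perm_inj->.
Qed.

Lemma nonnb (R : realType) (TG : finType) (G : rel TG) (Sw Uj : {set TG}) z (e : R) :
  symmetric G -> Sw \subset Uj -> #|Uj|%:R - e <= #|nbhd_in G z Uj|%:R ->
  #|[set y in Sw | ~~ G y z]|%:R <= e.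
Proof.
move=> Gsym sub h.
have s1 : [set y in Sw | ~~ G y z] \subset Uj :\: nbhd_in G z Uj.
  apply/subsetP => y; rewrite /nbhd_in !inE Gsym => /andP[yS nG].
  by rewrite (subsetP sub y yS) (negbTE nG).
have := cardsID (nbhd_in G z Uj) Uj.
rewrite (setIidPr _); last by apply/subsetP => y; rewrite /nbhd_in inE => /andP[].
move=> E; move: h; rewrite -E natrD => h.
have := subset_leq_card s1; rewrite -(ler_nat R) => h2.
lra.
Qed.

Theorem lemma3p3 (R : realType) (r : nat) (TF : finType) (F : rel TF) :
  (2 <= r)%N ->
  simple_graph F ->
  chromatic_number_eq F r.+1 ->
  (exists u v, color_critical_edge F r.+1 u v) ->
  exists eps0 : R, 0 < eps0 /\
    forall eps : R, 0 < eps -> eps < eps0 ->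
    exists n0 : nat, forall (TG : finType) (G : rel TG) (U : 'I_r -> {set TG}),
      simple_graph G ->
      F_free F G ->
      (n0 <= #|TG|)%N ->
      (forall i j, i != j -> [disjoint U i & U j]) ->
      (forall i, (r * #|TF|)%:R * eps * #|TG|%:R + #|TF|%:R <= #|U i|%:R) ->
      (forall i j v, i != j -> v \in U i ->
         #|U j|%:R - eps * #|TG|%:R <= #|nbhd_in G v (U j)|%:R) ->
      (forall i, independent G (U i)) /\
      (forall x, x \notin \bigcup_(i < r) U i ->
         exists i : 'I_r,
           #|nbhd_in G x (U i)|%:R <= eps * r%:R * #|TF|%:R * #|TG|%:R).
Proof.
move=> r2 [Fsym Firr] [_ nc] [u [v crit]].
have col := crit_col nc crit.
have Fuv := crit.1.
have uv : u != v by apply: contraTneq Fuv => ->; rewrite Firr.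
exists 1; split => // eps e0 _.
set t := #|TF|.
exists (Num.bound (t%:R / eps)) => TG G U [Gsym Girr] Gfree Hn Hdisj Hsize Hnb.
have E0 : 0 <= eps * #|TG|%:R by rewrite mulr_ge0 // ltW.
have En : t%:R < eps * #|TG|%:R.
  have h := archi_boundP (divr_ge0 (ler0n R t) (ltW e0)).
  rewrite -(ltr_pM2l e0) mulrCA divff ?mulr1 in h; last by rewrite gt_eqF.
  apply: lt_le_trans h _; apply: ler_wpM2l; [exact: ltW | rewrite ler_nat; exact: Hn].
have r1 : 1 <= r%:R :> R by rewrite ler1n; apply: leq_trans r2.
have Dt : forall (D : {set TF}) w, w \notin D -> (#|D| < t)%N.
  move=> D w wD; rewrite /t -cardsT; apply: proper_card; rewrite properT.
  by apply: contraNneq wD => ->; rewrite in_setT.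
split.
  move=> i x y xU yU; apply/negP => Gxy; apply: Gfree.
  have [c [cu cv cp]] := col i.
  have vu : v != u by rewrite eq_sym.
  pose S a := U (c a) :&: (if a == u then [set x] else if a == v then [set y] else setT).
  apply: (@greedy TF TG F G S [set u; v]
     (fun a => if a == u then x else y) Firr Gsym).
  - split.
    + move=> a b; rewrite !inE => /orP[]/eqP-> /orP[]/eqP->; rewrite ?eqxx ?(negbTE vu) //.
      * by move=> E; rewrite E Girr in Gxy.
      * by move=> E; rewrite E Girr in Gxy.
    + move=> a; rewrite !inE => /orP[]/eqP->; rewrite /S ?eqxx ?(negbTE vu) ?cu ?cv !inE ?xU ?yU ?eqxx //.
    + move=> a b; rewrite !inE => /orP[]/eqP-> /orP[]/eqP->; rewrite ?eqxx ?(negbTE vu) ?Firr //.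
      by rewrite Gsym.
  - move=> w D f wD sub [finj fS fG].
    have uD : u \in D by apply: (subsetP sub); rewrite !inE eqxx.
    have vD : v \in D by apply: (subsetP sub); rewrite !inE eqxx orbT.
    have wu : w != u by apply: contraNneq wD => ->.
    have wv : w != v by apply: contraNneq wD => ->.
    have Sw : S w = U (c w) by rewrite /S (negbTE wu) (negbTE wv) setIT.
    apply: (step_gen (b := eps * #|TG|%:R)) => //.
    + move=> a aD e; rewrite Sw; apply: (nonnb Gsym (subxx _)).
      apply: (Hnb (c a)).
      * rewrite eq_sym; apply: cp.
        have Fwa : F w a by case/orP: e => // ; rewrite Fsym.
        by rewrite /del_edge Fwa (negbTE wu) (negbTE wv).
      * by have := fS a aD; rewrite /S inE => /andP[].
    + rewrite Sw; apply: lt_le_trans (Hsize (c w)).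
      have d1 : (#|D|%:R + 1 <= t%:R :> R) by rewrite natr1 ler_nat (Dt D w wD).
      have h1 : #|D|%:R * (eps * #|TG|%:R) <= t%:R * (eps * #|TG|%:R) :> R.
        by apply: ler_wpM2r => //; lra.
      have h2 : t%:R * (eps * #|TG|%:R) <= r%:R * t%:R * (eps * #|TG|%:R) :> R.
        rewrite -mulrA -[X in X <= _]mul1r; apply: ler_wpM2r; [by rewrite mulr_ge0 ?ler0n | exact: r1].
      rewrite natrM -!mulrA; rewrite -!mulrA in h2; lra.
move=> x xn.
case: (pickP (fun i : 'I_r => #|nbhd_in G x (U i)|%:R <= eps * r%:R * t%:R * #|TG|%:R)) => [i hi|hall].
  by exists i.
exfalso; apply: Gfree.
have i0 : 'I_r := Ordinal (leq_trans (isT : (0 < 2)%N) r2).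
have [c [cu cv cp]] := col i0.
have xU : forall j, x \notin U j.
  by move=> j; apply: contra xn => xj; apply/bigcupP; exists j.
pose S a := if a == u then [set x] else if F u a then nbhd_in G x (U (c a)) else U (c a).
have SU : forall a, a != u -> S a \subset U (c a).
  move=> a au; rewrite /S (negbTE au); case: (F u a) => //.
  by apply/subsetP => y; rewrite /nbhd_in inE => /andP[+ _].
apply: (@greedy TF TG F G S [set u] (fun _ => x) Firr Gsym).
- split.
  + by move=> a b; rewrite !inE => /eqP-> /eqP->.
  + by move=> a; rewrite !inE => /eqP->; rewrite /S eqxx inE.
  + by move=> a b; rewrite !inE => /eqP-> /eqP->; rewrite Firr.
- move=> w D f wD sub [finj fS fG].
  have uD : u \in D by apply: (subsetP sub); rewrite !inE eqxx.
  have wu : w != u by apply: contraNneq wD => ->.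
  apply: (step_gen (b := eps * #|TG|%:R)) => //.
  + move=> a aD e.
    have Fwa : F w a by case/orP: e => // ; rewrite Fsym.
    case: (eqVneq a u) => [au|au].
      subst a.
      have fu : f u = x by have := fS u aD; rewrite /S eqxx inE => /eqP.
      rewrite fu (_ : [set _ in _ | _] = set0) ?cards0 //.
      apply/setP => y; rewrite !inE /S (negbTE wu) Fsym Fwa /nbhd_in inE Gsym.
      by rewrite -andbA andbN andbF.
    apply: (nonnb Gsym (SU w wu)).
    apply: (Hnb (c a)).
    * rewrite eq_sym; apply: cp.
      by rewrite /del_edge Fwa (negbTE wu) (negbTE au) !andbF.
    * exact: (subsetP (SU a au) _ (fS a aD)).
  + have hw : eps * r%:R * t%:R * #|TG|%:R < #|nbhd_in G x (U (c w))|%:R by rewrite ltNge (hall (c w)).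
    have cS : (#|nbhd_in G x (U (c w))| <= #|S w|)%N.
      rewrite /S (negbTE wu); case: (F u w) => //.
      by apply: subset_leq_card; apply/subsetP => y; rewrite /nbhd_in inE => /andP[+ _].
    rewrite -(ler_nat R) in cS.
    apply: lt_le_trans cS; apply: le_lt_trans hw.
    have d1 : (#|D|%:R + 1 <= t%:R :> R) by rewrite natr1 ler_nat (Dt D w wD).
    have h1 : (#|D|%:R + 1) * (eps * #|TG|%:R) <= t%:R * (eps * #|TG|%:R) :> R.
      by apply: ler_wpM2r.
    have h2 : t%:R * (eps * #|TG|%:R) <= r%:R * t%:R * (eps * #|TG|%:R) :> R.
      rewrite -mulrA -[X in X <= _]mul1r; apply: ler_wpM2r; [by rewrite mulr_ge0 ?ler0n | exact: r1].
    have e3 : eps * r%:R * t%:R * #|TG|%:R = r%:R * t%:R * (eps * #|TG|%:R).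
      by rewrite -!mulrA mulrCA; congr (_ * _); rewrite mulrCA.
    rewrite e3 le_eqVlt; apply/orP; right.
    have : #|D|%:R < eps * #|TG|%:R :> R by apply: le_lt_trans En; lra.
    move: h1; rewrite mulrDl mul1r; lra.
Qed.
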